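(* Let $n$ be a positive integer and let $\theta=\lambda/\mu$ be a skew Young diagram such that every column of $\theta$ contains at most $n$ boxes. Then the number $|\mathrm{SVT}(\theta,n)|$ of set-valued tableaux of shape $\theta$ with entries in $[n]=\{1,\dots,n\}$ is odd.
   Context: A partition $\lambda=(\lambda_1\ge\lambda_2\ge\cdots\ge 0)$ is identified with its Young diagram $\{(i,j)\in\mathbb{Z}_{>0}^2 : j\le\lambda_i\}$ (row index $i$ increasing downward, column index $j$ increasing to the right). For partitions $\mu\subseteq\lambda$, the skew Young diagram $\theta=\lambda/\mu$ is the set-theoretic difference $\lambda\setminus\mu$, and $|\theta|$ is its number of boxes. A set-valued tableau of shape $\theta$ with entries in $[n]$ is an assignment of a non-empty subset $T_{i,j}\subseteq[n]$ to each box $(i,j)\in\theta$ such that $\max T_{i,j}\le\min T_{i,j+1}$ whenever $(i,j),(i,j+1)\in\theta$, and $\max T_{i,j}<\min T_{i+1,j}$ whenever $(i,j),(i+1,j)\in\theta$. $\mathrm{SVT}(\theta,n)$ denotes the set of all such tableaux. *)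

(* Defs.v *)
From mathcomp Require Import all_boot.
Set Implicit Arguments. Unset Strict Implicit. Unset Printing Implicit Defensive.

(* A partition is a weakly decreasing sequence of naturals
   lam = [:: lam_1; lam_2; ...] (trailing zeros allowed; lam_i = nth 0 lam (i-1)). *)
Definition is_partition (lam : seq nat) : bool := sorted geq lam.

Definition part_sub (mu lam : seq nat) : Prop :=
  forall i, nth 0 mu i <= nth 0 lam i.

(* Box in 0-based coordinates (i, j) stands for the box (i+1, j+1).
   (i+1, j+1) \in lam / mu  iff  mu_{i+1} < j+1 <= lam_{i+1}. *)
Definition in_skew (lam mu : seq nat) (i j : nat) : bool :=
  (nth 0 mu i <= j) && (j < nth 0 lam i).

Definition col_count (lam mu : seq nat) (j : nat) : nat :=
  count (fun i => in_skew lam mu i j) (iota 0 (size lam)).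

(* Entries: value k : 'I_n stands for the integer k+1 of [n]. *)
Definition setmax n (A : {set 'I_n}) : nat := \max_(a in A) (val a).
Definition setmin n (A : {set 'I_n}) : nat := \big[minn/n]_(a in A) (val a).

(* Rows indexed by 'I_(size lam), columns by 'I_(head 0 lam) (lam_1 columns);
   every box of lam/mu lies in this rectangle. Off the diagram the filling is
   forced to be empty so that fillings correspond bijectively to SVT(theta,n). *)
Definition box_t (lam : seq nat) := ('I_(size lam) * 'I_(head 0 lam))%type.

Definition is_svt (lam mu : seq nat) (n : nat)
    (T : {ffun box_t lam -> {set 'I_n}}) : bool :=
  [forall x : box_t lam,
     if in_skew lam mu x.1 x.2 then T x != set0 else T x == set0] &&
  [forall x : box_t lam, forall y : box_t lam,
     ((in_skew lam mu x.1 x.2 && in_skew lam mu y.1 y.2) ==>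
     ((((val y.1 == val x.1) && (val y.2 == (val x.2).+1)) ==>
         (setmax (T x) <= setmin (T y))) &&
      (((val y.1 == (val x.1).+1) && (val y.2 == val x.2)) ==>
         (setmax (T x) < setmin (T y)))))].

Definition SVT (lam mu : seq nat) (n : nat) :=
  [set T : {ffun box_t lam -> {set 'I_n}} | @is_svt lam mu n T].

(* Main.v *)
Require Import Defs.
From mathcomp Require Import all_boot.
From Stdlib Require Import Lia.
From mathcomp Require Import zify.
Set Implicit Arguments. Unset Strict Implicit. Unset Printing Implicit Defensive.

Lemma setmax_leP n (X : {set 'I_n}) m : reflect (forall a, a \in X -> val a <= m) (setmax X <= m).
Proof. exact: bigmax_leqP. Qed.

Lemma le_setmax n (X : {set 'I_n}) a : a \in X -> val a <= setmax X.
Proof. move=> aX; exact: (@leq_bigmax_cond _ (fun a => a \in X) (fun a : 'I_n => val a) a aX). Qed.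

Lemma setmin_le n (X : {set 'I_n}) a : a \in X -> setmin X <= val a.
Proof.
move=> aX; rewrite /setmin -big_filter.
have: a \in [seq i <- index_enum 'I_n | i \in X] by rewrite mem_filter aX mem_index_enum.
elim: [seq i <- _ | _] => //= i s IH; rewrite big_cons inE => /orP[/eqP<-|/IH h].
  exact: geq_minl.
exact: leq_trans (geq_minr _ _) h.
Qed.

Lemma setmin_geP n (X : {set 'I_n}) m : X != set0 ->
  reflect (forall a, a \in X -> m <= val a) (m <= setmin X).
Proof.
move=> ne; apply: (iffP idP).
  by move=> H a aX; apply: leq_trans H (setmin_le aX).
case/set0Pn: ne => a0 a0X H; rewrite /setmin; apply: (big_ind (fun v => m <= v)).
- by apply: leq_trans (H _ a0X) (ltnW (ltn_ord a0)).
- by move=> x y; rewrite leq_min => -> ->.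
- by move=> i; apply: H.
Qed.

Section Gen.
Variables (B : finType) (n : nat) (R D : rel B) (w : B -> nat).
Hypotheses (wR : forall x y, R x y -> w x < w y) (wD : forall x y, D x y -> w x < w y).

Definition ok (S : {set B}) (r : B -> nat) (T : {ffun B -> {set 'I_n}}) : bool :=
 [forall x, if x \in S then (T x != set0) && [forall a in T x, val a < r x] else T x == set0] &&
 [forall x, forall y, ((x \in S) && (y \in S)) ==>
    ((R x y ==> (setmax (T x) <= setmin (T y))) && (D x y ==> (setmax (T x) < setmin (T y))))].

Lemma okP (S : {set B}) (r : B -> nat) (T : {ffun B -> {set 'I_n}}) : reflect
  ((forall x, if x \in S then (T x != set0) /\ (forall a, a \in T x -> val a < r x) else T x = set0) /\
   (forall x y, x \in S -> y \in S ->
      (R x y -> setmax (T x) <= setmin (T y)) /\ (D x y -> setmax (T x) < setmin (T y))))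
  (ok S r T).
Proof.
apply: (iffP andP) => [[/forallP H1 /forallP H2]|[H1 H2]]; split.
- move=> x; have := H1 x; case: (x \in S) => [/andP[-> /forall_inP h]|/eqP //].
  by split.
- move=> x y xS yS; have /forallP/(_ y) := H2 x; rewrite xS yS /=.
  by case/andP => /implyP h1 /implyP h2.
- apply/forallP => x; have := H1 x; case: (x \in S) => [[-> h]|->] //=.
  exact/forall_inP.
- apply/forallP => x; apply/forallP => y; apply/implyP => /andP[xS yS].
  by have [h1 h2] := H2 x y xS yS; apply/andP; split; apply/implyP.
Qed.

Theorem gen_odd (S : {set B}) (r : B -> nat) : (forall x, x \in S -> 0 < r x <= n) ->
  (forall x y, x \in S -> y \in S -> R x y -> r x <= r y) ->
  (forall x y, x \in S -> y \in S -> D x y -> r x < r y) ->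
  odd #|[set T | ok S r T]|.
Proof.
have [k] := ubnP #|S|; elim: k S => // k IH S; rewrite ltnS => leS Hr HRr HDr.
case: (set_0Vmem S) => [-> | [b0 b0S]].
  suff ->: [set T | ok set0 r T] = [set [ffun=> set0]] by rewrite cards1.
  apply/setP => T; rewrite !inE; apply/okP/eqP.
    case=> H1 _; apply/ffunP => x; rewrite ffunE; have := H1 x; by rewrite inE.
  by move=> ->; split => [x|x y]; rewrite ?inE ?ffunE.
case: (@arg_maxnP _ b0 (fun x => x \in S) w b0S) => b bS bmax.
set S' := S :\ b.
have S'S : forall x, x \in S' -> x \in S by move=> x; rewrite inE => /andP[].
have S'b : forall x, x \in S' -> x != b by move=> x; rewrite !inE => /andP[? _].
have IH' : odd #|[set T | ok S' r T]|.
  apply: IH.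
  - by rewrite (cardsD1 b S) bS in leS.
  - by move=> x /S'S; apply: Hr.
  - by move=> x y /S'S xS /S'S yS; apply: HRr.
  - by move=> x y /S'S xS /S'S yS; apply: HDr.
pose phi (T : {ffun B -> {set 'I_n}}) := [ffun x => if x == b then set0 else T x].
pose upd (T : {ffun B -> {set 'I_n}}) X := [ffun x => if x == b then X else T x].
pose V (T' : {ffun B -> {set 'I_n}}) := [set a : 'I_n | (val a < r b) &&
   [forall y, (y \in S') ==> ((R y b ==> (setmax (T' y) <= val a)) &&
                            (D y b ==> (setmax (T' y) < val a)))]].
have key : forall T', ok S' r T' -> forall X, ok S r (upd T' X) = (X \in powerset (V T') :\ set0).
  move=> T' /okP [H1 H2] X; apply/idP/idP.
    move/okP => [G1 G2]; have := G1 b; rewrite bS ffunE eqxx => -[Xne Xr].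
    rewrite !inE Xne /=; apply/subsetP => a aX; rewrite inE Xr //=.
    apply/forallP => y; apply/implyP => yS'.
    have yS := S'S _ yS'; have yb := S'b _ yS'.
    have [h1 h2] := G2 y b yS bS; rewrite !ffunE (negbTE yb) eqxx in h1 h2.
    apply/andP; split; apply/implyP => h.
      exact: leq_trans (h1 h) (setmin_le aX).
    exact: leq_trans (h2 h) (setmin_le aX).
  rewrite !inE => /andP[Xne /subsetP XV]; apply/okP; split.
    move=> x; rewrite ffunE; case: (eqVneq x b) => [->|xb].
      rewrite bS; split=> // a /XV; rewrite inE => /andP[] //.
    by have := H1 x; rewrite !inE xb.
  move=> x y xS yS; rewrite !ffunE; case: (eqVneq x b) => [xb | xb].
    by subst x; have /= hb := bmax _ yS; split => h; [have := wR h | have := wD h]; rewrite ltnNge hb.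
  case: (eqVneq y b) => [yb|yb].
    subst y; have xS' : x \in S' by rewrite !inE xb.
    split => h; apply/(setmin_geP _ Xne) => a /XV; rewrite inE => /andP[_ /forallP/(_ x)];
      rewrite xS' /= => /andP[/implyP h1 /implyP h2]; [exact: h1 | exact: h2].
  by have := H2 x y; rewrite !inE xb yb xS yS; apply.
have phiok : forall T, ok S r T -> ok S' r (phi T).
  move=> T /okP[H1 H2]; apply/okP; split.
    move=> x; rewrite ffunE !inE; case: (eqVneq x b) => [_|xb] /=; [by case: (x \in S) | exact: H1].
  move=> x y; rewrite !inE !ffunE => /andP[xb xS] /andP[yb yS].
  by rewrite (negbTE xb) (negbTE yb); apply: H2.
have recon : forall T : {ffun B -> {set 'I_n}}, T = upd (phi T) (T b).
  by move=> T; apply/ffunP => x; rewrite !ffunE; case: eqP => // ->.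
have fib : forall T', ok S' r T' ->
    odd (\sum_(T | (T \in [set T | ok S r T]) && (phi T == T')) 1).
  move=> T' okT'; rewrite sum1dep_card.
  have Tb : T' b = set0.
    by case/okP: okT' => H1 _; have := H1 b; rewrite !inE eqxx.
  have -> : [set T | (T \in [set T | ok S r T]) && (phi T == T')] =
            upd T' @: (powerset (V T') :\ set0).
    apply/setP => T; rewrite inE; apply/andP/imsetP.
      rewrite inE => -[okT /eqP <-]; exists (T b); last exact: recon.
      by rewrite -key ?phiok // -recon.
    case=> X XV ->; split; first by rewrite inE key.
    apply/eqP/ffunP => x; rewrite !ffunE; case: eqP => // ->; by rewrite Tb.
  rewrite card_in_imset; last first.
    by move=> X1 X2 _ _ /ffunP /(_ b); rewrite !ffunE eqxx.
  have := cardsD1 set0 (powerset (V T')); rewrite !inE sub0set card_powerset add1n.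
  move=> /(congr1 predn) /= <-.
  have rb := Hr b bS; have rbn : r b - 1 < n by case/andP: rb => ? ?; rewrite subn1 prednK //.
  have : Ordinal rbn \in V T'.
    case/okP: okT' => H1 _.
    rewrite inE /= subn1 ltn_predL (andP rb).1 /=; apply/forallP => y; apply/implyP => yS'.
    have := H1 y; rewrite yS' => -[_ ya]; have yS := S'S _ yS'.
    apply/andP; split; apply/implyP => h.
      apply/setmax_leP => a /ya ay; have := HRr _ _ yS bS h; case/andP: rb => ? ? hh.
      rewrite -subn1; apply/leP; move/leP: ay; move/leP: hh; rewrite -?subn1; lia.
    have hh := HDr _ _ yS bS h; case/andP: rb => ? ?; have /andP[? ?] := Hr y yS.
    have : setmax (T' y) <= r b - 2.
      apply/setmax_leP => a /ya ay; lia.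
    lia.
  move=> hV.
  have : 0 < #|V T'| by apply/card_gt0P; exists (Ordinal rbn).
  case: #|V T'| => // m _; rewrite expnS /= -subn1 oddB ?muln_gt0 ?expn_gt0 //.
  by rewrite oddM.
rewrite -sum1_card (partition_big phi (fun T' => ok S' r T')); last first.
  by move=> T; rewrite inE; apply: phiok.
have -> : odd (\sum_(T' | ok S' r T') \sum_(T | (T \in [set T | ok S r T]) && (phi T == T')) 1)
        = odd (\sum_(T' | ok S' r T') 1).
  apply: (big_ind2 (fun a b => odd a = odd b)) => //.
    by move=> a1 a2 b1 b2; rewrite !oddD => -> ->.
by rewrite sum1dep_card.
Qed.

End Gen.
Section Main.
Variables (lam mu : seq nat).

Fixpoint dn (k i j : nat) : nat :=
  if k is k'.+1 then (if in_skew lam mu i.+1 j then (dn k' i.+1 j).+1 else 0) else 0.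

Lemma skew_size i j : in_skew lam mu i j -> i < size lam.
Proof.
rewrite /in_skew => /andP[_]; case: (ltnP i (size lam)) => // h.
by rewrite nth_default.
Qed.

Hypothesis pmu : is_partition mu.

Lemma mu_mono i t : i <= t -> nth 0 mu t <= nth 0 mu i.
Proof.
move=> it; case: (ltnP t (size mu)) => ht; last by rewrite nth_default.
have hi : i < size mu by apply: leq_ltn_trans ht.
exact: (@sorted_leq_nth _ geq (fun y x z h1 h2 => leq_trans h2 h1) leqnn 0 mu pmu i t hi ht it).
Qed.

Lemma skew_rd i j : in_skew lam mu i j -> in_skew lam mu i.+1 j.+1 -> in_skew lam mu i.+1 j.
Proof.
rewrite /in_skew => /andP[h1 _] /andP[_ h2]; rewrite (ltnW h2) andbT.
exact: leq_trans (mu_mono (leqnSn i)) h1.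
Qed.

Lemma dn_right k i j : in_skew lam mu i j -> dn k i j.+1 <= dn k i j.
Proof.
elim: k i => //= k IH i hij.
case: ifP => // h; rewrite (skew_rd hij h) ltnS; apply: IH; exact: skew_rd hij h.
Qed.

Lemma dn_contig k i j : in_skew lam mu i j -> forall t, t <= dn k i j -> in_skew lam mu (i + t) j.
Proof.
elim: k i => [|k IH] i hij t /=; first by rewrite leqn0 => /eqP ->; rewrite addn0.
case: ifP => h; last by rewrite leqn0 => /eqP ->; rewrite addn0.
case: t => [|t]; first by rewrite addn0.
by rewrite ltnS addnS -addSn => /(IH _ h).
Qed.

Lemma dn_count k i j : in_skew lam mu i j -> (dn k i j).+1 <= col_count lam mu j.
Proof.
move=> hij; set d := dn k i j.
have hs : i + d < size lam by apply: skew_size (dn_contig hij (leqnn d)).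
rewrite /col_count.
have -> : size lam = i + (d.+1 + (size lam - (i + d.+1))) by lia.
rewrite !iotaD !count_cat add0n.
have : all (fun t => in_skew lam mu t j) (iota i d.+1).
  apply/allP => t; rewrite mem_iota => /andP[h1 h2].
  have := @dn_contig k i j hij (t - i); rewrite subnKC //; apply; rewrite -/d; lia.
rewrite all_count size_iota => /eqP ->; lia.
Qed.

Lemma dn_unfold i j : in_skew lam mu i.+1 j ->
  dn (size lam - i) i j = (dn (size lam - i.+1) i.+1 j).+1.
Proof.
move=> h; have := skew_size h => hs.
by rewrite -(subnSK (ltnW hs)) /= h.
Qed.

Definition Rb : rel (box_t lam) := fun x y => (val y.1 == val x.1) && (val y.2 == (val x.2).+1).
Definition Db : rel (box_t lam) := fun x y => (val y.1 == (val x.1).+1) && (val y.2 == val x.2).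

Lemma svt_bound n (T : {ffun box_t lam -> {set 'I_n}}) : is_svt mu T ->
  forall k (x : box_t lam), in_skew lam mu x.1 x.2 -> forall a, a \in T x -> val a + dn k x.1 x.2 < n.
Proof.
case/andP=> /forallP H1 /forallP H2.
elim=> [|k IH] x hx a aT /=; first by rewrite addn0.
case: ifP => h; last by rewrite addn0.
have hs := skew_size h.
pose y : box_t lam := (Ordinal hs, x.2).
have := H1 y; rewrite /= h => /set0Pn[c cT].
have := IH y h c cT; rewrite /=.
have := forallP (H2 x) y; rewrite hx h /= !eqxx /= => /andP[_ hmm].
have h3 : (a : nat) <= setmax (T x) := le_setmax aT.
have h4 : setmin (T y) <= (c : nat) := setmin_le cT.
lia.
Qed.

End Main.

Unset Implicit Arguments.

Theorem theorem3p1 (n : nat) (lam mu : seq nat) :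
  0 < n ->
  is_partition lam -> is_partition mu -> part_sub mu lam ->
  (forall j, col_count lam mu j <= n) ->
  odd #|SVT lam mu n|.
Proof.
move=> n0 plam pmu psub hcol.
set S := [set x : box_t lam | in_skew lam mu x.1 x.2].
pose r := fun x : box_t lam => n - dn lam mu (size lam - x.1) x.1 x.2.
have Hr : forall x, x \in S -> 0 < r x <= n.
  move=> x; rewrite inE => hx; have := dn_count pmu (size lam - x.1) hx.
  move=> h1; rewrite /r leq_subr andbT subn_gt0; exact: leq_trans h1 (hcol _).
have -> : SVT lam mu n = [set T | ok (@Rb lam) (@Db lam) S r T].
  apply/setP => T; rewrite !inE; apply/idP/idP.
    move=> H; have Hb := svt_bound pmu H; case/andP: H => /forallP H1 /forallP H2.
    apply/andP; split.
      apply/forallP => x; have := H1 x; rewrite inE; case: ifP => // hx -> /=.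
      apply/forall_inP => a aT; rewrite /r ltn_subRL addnC; exact: Hb (size lam - x.1) x hx a aT.
    apply/forallP => x; apply/forallP => y; have := forallP (H2 x) y; by rewrite !inE.
  case/andP => /forallP H1 /forallP H2; apply/andP; split.
    apply/forallP => x; have := H1 x; rewrite inE; case: ifP => // hx /andP[-> _] //.
  apply/forallP => x; apply/forallP => y; have := forallP (H2 x) y; by rewrite !inE.
apply: (gen_odd (w := fun x : box_t lam => val x.1 + val x.2)) => //.
- by move=> x y /andP[/eqP -> /eqP ->]; lia.
- by move=> x y /andP[/eqP -> /eqP ->]; lia.
- move=> x y; rewrite !inE => hx hy /andP[/eqP e1 /eqP e2].
  rewrite /r; apply: leq_sub2l.
  have -> : (y.1 : nat) = x.1 := e1.
  have -> : (y.2 : nat) = (x.2).+1 := e2.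
  exact: dn_right.
- move=> x y xS yS /andP[/eqP e1 /eqP e2].
  have := Hr x xS; move: xS yS; rewrite !inE /r => hx hy.
  have f1 : (y.1 : nat) = (x.1).+1 := e1.
  have f2 : (y.2 : nat) = x.2 := e2.
  rewrite f1 f2 in hy *; rewrite dn_unfold //.
  move: (dn _ _ _ _ _) => d; lia.
Qed.
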